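(* There exist constants $C>0$ and $N$ such that for all integers $n\ge N$ and all $g\ge1$, \[0< s(n,g)\le \frac{C}{n^2}.\] That is, $s(n,g)=O(1/n^2)$ as $n\to\infty$, uniformly in $g$.
   Context: Define $\lambda:[0,\infty)\to(0,1/4]$ by $\lambda(0)=1/4$ and, for $\theta>0$, $\lambda(\theta)$ is the unique $\lambda\in(0,1/4)$ with $-1+\frac{\operatorname{artanh}(\sqrt{1-4\lambda})}{\sqrt{1-4\lambda}}=\theta$. For $\theta>0$ set $f(\theta)=-\ln\lambda(\theta)-2\theta-\theta\ln(1-4\lambda(\theta))$ and $j(\theta)=-\tfrac12\ln(1-4(\theta+1)\lambda(\theta))+\tfrac12\ln 2$. For integers $n\ge1$, $g\ge1$ let \[\Omega(n,g)=\frac{\sqrt g\,g^g}{\sqrt{2\pi}\,e^g\,g!}\,n^{2g-2}\exp\!\Big(nf\big(\tfrac gn\big)+j\big(\tfrac gn\big)\Big),\qquad \Omega(n,0)=\frac{4^n n^{-3/2}}{\sqrt{2\pi}},\] and $s(n,g)=\Omega(n,g-1)/\Omega(n,g)$ for $n,g\ge1$. *)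

(* Defs.v *)
From Stdlib Require Import Reals ClassicalEpsilon Arith Factorial.
Open Scope R_scope.

Definition artanh (x : R) : R := / 2 * ln ((1 + x) / (1 - x)).

Definition lam_eq (theta l : R) : Prop :=
  0 < l < / 4 /\
  -1 + artanh (sqrt (1 - 4 * l)) / sqrt (1 - 4 * l) = theta.

(* lambda(0) = 1/4; for theta > 0, the (unique) l in (0,1/4) solving lam_eq;
   chosen by Hilbert's epsilon (the paper asserts existence and uniqueness). *)
Definition lam (theta : R) : R :=
  if Req_EM_T theta 0 then / 4
  else epsilon (inhabits (/ 4)) (fun l => lam_eq theta l).

Definition f_fun (theta : R) : R :=
  - ln (lam theta) - 2 * theta - theta * ln (1 - 4 * lam theta).

Definition j_fun (theta : R) : R :=
  - / 2 * ln (1 - 4 * (theta + 1) * lam theta) + / 2 * ln 2.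

Definition Omega (n g : nat) : R :=
  match g with
  | O => 4 ^ n * / (INR n * sqrt (INR n)) / sqrt (2 * PI)
  | S _ =>
      let gr := INR g in
      let nr := INR n in
      sqrt gr * gr ^ g / (sqrt (2 * PI) * exp gr * INR (fact g))
      * nr ^ (2 * g - 2)
      * exp (nr * f_fun (gr / nr) + j_fun (gr / nr))
  end.

Definition s (n g : nat) : R := Omega n (g - 1) / Omega n g.

(* Main.v *)
Require Import Defs.
From Stdlib Require Import Reals Lra Lia Psatz Ranalysis5 ClassicalEpsilon Arith Factorial.
From Coquelicot Require Import Coquelicot.
Open Scope R_scope.

Lemma artanh0 : artanh 0 = 0.
Proof. unfold artanh. replace ((1+0)/(1-0)) with 1 by field. rewrite ln_1; ring. Qed.

Lemma L1 x : 0 <= x < 1 -> x + x^3/3 <= artanh x.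
Proof.
  intros Hx. destruct (Req_dec x 0) as [->|Hx0].
  { rewrite artanh0. lra. }
  set (phi := fun t => artanh t - t - t^3/3).
  destruct (MVT_cor2 phi (fun t => t^4 / ((1-t)*(1+t))) 0 x) as [c [Hc1 Hc2]].
  - lra.
  - intros c Hc. apply is_derive_Reals. unfold phi, artanh. auto_derive.
    + repeat split; try lra. apply Rdiv_lt_0_compat; lra.
    + try change ((1 + c) * / (1 + - c)) with ((1+c)/(1-c)) in *. field. repeat split; try lra; nra.
  - unfold phi in Hc1. rewrite artanh0 in Hc1.
    assert (0 <= c ^ 4 / ((1 - c) * (1 + c)) * (x - 0)).
    { apply Rmult_le_pos; [|lra]. apply Rdiv_le_0_compat.
      nra. apply Rmult_lt_0_compat; lra. }
    lra.
Qed.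

Lemma L2 x : 0 <= x < 1 -> (1 - x*x) * artanh x <= x - 2 * x^3/3.
Proof.
  intros Hx. destruct (Req_dec x 0) as [->|Hx0].
  { rewrite artanh0. lra. }
  set (phi := fun t => t - 2 * t^3/3 - (1 - t*t) * artanh t).
  destruct (MVT_cor2 phi (fun t => 2 * t * (artanh t - t)) 0 x) as [c [Hc1 Hc2]].
  - lra.
  - intros c Hc. apply is_derive_Reals. unfold phi, artanh. auto_derive.
    + repeat split; try lra. apply Rdiv_lt_0_compat; lra.
    + change ((1 + c) * / (1 + - c)) with ((1+c)/(1-c)) in *. field. repeat split; try lra; nra.
  - unfold phi in Hc1. rewrite artanh0 in Hc1.
    pose proof (L1 c ltac:(lra)).
    assert (0 <= 2 * c * (artanh c - c) * (x - 0)).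
    { apply Rmult_le_pos; [|lra]. apply Rmult_le_pos. lra. nra. }
    lra.
Qed.

Definition h (x : R) := artanh x / x - 1.

Lemma d_h c : 0 < c < 1 ->
  derivable_pt_lim h c ((c - (1 - c*c) * artanh c) / (c*c*(1-c*c))).
Proof.
  intros Hc. apply is_derive_Reals. unfold h, artanh. auto_derive.
  + repeat split; try lra. apply Rdiv_lt_0_compat; lra.
  + try change ((1 + c) * / (1 + - c)) with ((1+c)/(1-c)) in *. field. repeat split; try lra; nra.
Qed.

Lemma h_mono x y : 0 < x <= y -> y < 1 -> h x <= h y.
Proof.
  intros Hx Hy. destruct (Req_dec x y) as [->|Hne]; [lra|].
  destruct (MVT_cor2 h (fun t => (t - (1 - t*t) * artanh t) / (t*t*(1-t*t))) x y)
    as [c [Hc1 Hc2]].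
  - lra.
  - intros c Hc. apply d_h. lra.
  - pose proof (L2 c ltac:(lra)).
    assert (0 <= (c - (1 - c * c) * artanh c) / (c * c * (1 - c * c)) * (y - x)).
    { apply Rmult_le_pos; [|lra]. apply Rdiv_le_0_compat. nra.
      apply Rmult_lt_0_compat. nra. nra. }
    lra.
Qed.

Definition F (x : R) := - ln ((1 - x*x)/4) - 2 * h x - 2 * h x * ln x.

Lemma F_mono x y : 0 < x <= y -> y < 1 -> F x <= F y.
Proof.
  intros Hx Hy. destruct (Req_dec x y) as [->|Hne]; [lra|].
  destruct (MVT_cor2 F (fun t => - 2 * ((t - (1 - t*t) * artanh t) / (t*t*(1-t*t))) * ln t) x y)
    as [c [Hc1 Hc2]].
  - lra.
  - intros c Hc. apply is_derive_Reals. unfold F, h, artanh. auto_derive;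
    repeat split; try lra; try (apply Rmult_lt_0_compat; [nra|lra]);
    try (apply Rdiv_lt_0_compat; lra).
    + try change ((1 + c) * / (1 + - c)) with ((1+c)/(1-c)) in *. field. repeat split; try lra; nra.
  - pose proof (L2 c ltac:(lra)).
    assert (ln c < 0). { rewrite <- ln_1. apply ln_increasing; lra. }
    assert (0 <= (c - (1 - c * c) * artanh c) / (c * c * (1 - c * c))).
    { apply Rdiv_le_0_compat. nra.
      apply Rmult_lt_0_compat. nra. nra. }
    assert (0 <= - 2 * ((c - (1 - c * c) * artanh c) / (c * c * (1 - c * c))) * ln c * (y - x)).
    { apply Rmult_le_pos; [|lra]. nra. }
    lra.
Qed.

Lemma h_upper x : 0 < x < 1 -> h x <= x*x / (3 * (1 - x*x)).
Proof.
  intros Hx. pose proof (L2 x ltac:(lra)). unfold h.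
  assert (artanh x <= (x - 2*x^3/3) / (1 - x*x)).
  { apply (Rmult_le_reg_l (1 - x*x)). nra. field_simplify; nra. }
  apply (Rmult_le_reg_l (3 * x * (1 - x*x))). nra.
  assert (artanh x * (1 - x*x) <= x - 2*x^3/3) by nra.
  field_simplify; try nra. 
Qed.

Lemma h_exists th : 0 < th -> exists x, 0 < x < 1 /\ h x = th.
Proof.
  intros Hth.
  set (e := Rmin (/2) th).
  assert (He : 0 < e <= /2 /\ e <= th) by (unfold e; split; [split|]; [apply Rmin_pos; lra| apply Rmin_l | apply Rmin_r]).
  set (E := exp (2*th + 2)).
  assert (HE : 1 < E). { unfold E. pose proof (exp_ineq1_le (2*th+2)). lra. }
  set (y := (E - 1) / (E + 1)).
  assert (Hy : 0 < y < 1). { unfold y. split. apply Rdiv_lt_0_compat; lra.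
    apply (Rmult_lt_reg_r (E+1)). lra. field_simplify; lra. }
  assert (Hhy : th < h y).
  { unfold h. replace (artanh y) with (th + 1).
    - apply (Rmult_lt_reg_r y). lra. field_simplify; nra.
    - unfold artanh. replace ((1 + y) / (1 - y)) with E.
      + unfold E. rewrite ln_exp. field.
      + unfold y. field. split; lra. }
  assert (Hhe : h e < th).
  { pose proof (h_upper e ltac:(lra)).
    assert (e * e / (3 * (1 - e * e)) <= e*e/2).
    { apply (Rmult_le_reg_r (3 * (1 - e*e))). nra. assert (e*e <= /4) by nra. field_simplify; nra. }
    nra. }
  assert (Hey : e < y).
  { destruct (Rlt_or_le e y) as [?|Hle]; [auto|].
    pose proof (h_mono y e ltac:(lra) ltac:(lra)). lra. }
  destruct (IVT_interv (fun t => h t - th) e y) as [z [Hz1 Hz2]].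
  - intros a Ha. apply continuity_pt_minus; [|apply continuity_pt_const; intros ??; reflexivity].
    apply derivable_continuous_pt. exists ((a - (1 - a*a) * artanh a) / (a*a*(1-a*a))).
    apply d_h. lra.
  - lra.
  - lra.
  - lra.
  - exists z. split; lra.
Qed.

Lemma lam_spec th : 0 < th -> exists x, 0 < x < 1 /\ h x = th /\ lam th = (1 - x*x)/4.
Proof.
  intros Hth. unfold lam. destruct (Req_EM_T th 0) as [|_]; [lra|].
  set (l := epsilon _ _).
  assert (Hl : lam_eq th l).
  { apply epsilon_spec. destruct (h_exists th Hth) as [x [Hx Hhx]].
    exists ((1 - x*x)/4). split; [split; nra|].
    replace (1 - 4 * ((1 - x * x) / 4)) with (x*x) by field.
    rewrite sqrt_square by lra. unfold h in Hhx. lra. }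
  destruct Hl as [Hl1 Hl2].
  set (x := sqrt (1 - 4*l)) in *.
  assert (Hx2 : x * x = 1 - 4*l) by (apply sqrt_sqrt; lra).
  assert (0 < x) by (apply sqrt_lt_R0; lra).
  exists x. split; [split; nra|]. split.
  - unfold h. lra.
  - lra.
Qed.

Lemma F_ge x : 0 < x < 1 -> ln 4 <= F x.
Proof.
  intros Hx. unfold F.
  pose proof (L1 x ltac:(lra)) as HL1.
  assert (Hh : 0 <= h x).
  { unfold h. apply (Rmult_le_reg_r x). lra. field_simplify; try lra. nra. }
  assert (Hln : ln x <= x - 1). { pose proof (exp_ineq1_le (ln x)). rewrite exp_ln in H; lra. }
  assert (Hl1 : ln (1 + x) <= x). { pose proof (exp_ineq1_le (ln (1+x))). rewrite exp_ln in H; lra. }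
  rewrite ln_div by nra. replace (1 - x*x) with ((1-x)*(1+x)) by ring.
  rewrite ln_mult by lra.
  assert (Hhx : h x * x = artanh x - x). { unfold h. field. lra. }
  assert (Ha : 2 * artanh x = ln (1+x) - ln (1-x)).
  { unfold artanh. rewrite ln_div by lra. field. }
  assert (2 * h x * (1 + ln x) <= 2 * h x * x) by nra.
  nra.
Qed.

Definition Q x := 1 - (h x + 1) * (1 - x*x).

Lemma Q_bounds x : 0 < x < 1 ->
  2 * (x*x) / 3 <= Q x /\ Q x <= x * x /\ x * x <= 3 * h x /\
  h x <= x*x / (3 * (1 - x*x)).
Proof.
  intros Hx. pose proof (L1 x ltac:(lra)). pose proof (L2 x ltac:(lra)).
  pose proof (h_upper x Hx).
  assert (Hhx : h x + 1 = artanh x / x). { unfold h. ring. }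
  assert (Hhx' : (h x + 1) * x = artanh x). { rewrite Hhx. field. lra. }
  assert (A1 : h x * x >= x^3/3) by nra.
  assert (A2 : x*x/3 <= h x).
  { apply (Rmult_le_reg_r x). lra. nra. }
  assert (A3 : (h x + 1) * (1-x*x) * x <= (1 - 2*x*x/3) * x).
  { rewrite Rmult_assoc, (Rmult_comm (1 - x*x)), <- Rmult_assoc, Hhx'. nra. }
  assert (A4 : (h x + 1) * (1-x*x) <= (1 - 2*x*x/3)).
  { apply (Rmult_le_reg_r x). lra. exact A3. }
  unfold Q. repeat split; try assumption.
  - nra.
  - nra.
  - nra.
Qed.

Lemma theta_spec th : 0 < th -> exists x, 0 < x < 1 /\ h x = th /\
  f_fun th = F x /\ j_fun th = - / 2 * ln (Q x) + / 2 * ln 2.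
Proof.
  intros Hth. destruct (lam_spec th Hth) as [x [Hx [Hh Hl]]].
  exists x. split; [auto|split; [auto|split]].
  - unfold f_fun, F. rewrite Hl, <- Hh.
    replace (1 - 4 * ((1 - x * x) / 4)) with (x*x) by field.
    rewrite ln_mult by lra. ring.
  - unfold j_fun. rewrite Hl, <- Hh. unfold Q.
    replace (1 - 4 * (h x + 1) * ((1 - x * x) / 4)) with (1 - (h x + 1) * (1 - x * x)) by field.
    reflexivity.
Qed.

Definition B (g : nat) := sqrt (INR g) * INR g ^ g / (sqrt (2*PI) * exp (INR g) * INR (fact g)).

Lemma Omega_S n m : Omega n (S m) = B (S m) * INR n ^ (2*m) *
  exp (INR n * f_fun (INR (S m) / INR n) + j_fun (INR (S m) / INR n)).
Proof.
  unfold Omega, B. cbv zeta. replace (2 * S m - 2)%nat with (2*m)%nat by lia. reflexivity.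
Qed.

Lemma sqrt2PI_pos : 0 < sqrt (2*PI).
Proof. apply sqrt_lt_R0. pose proof PI_RGT_0. lra. Qed.

Lemma B_pos g : (1 <= g)%nat -> 0 < B g.
Proof.
  intros Hg. unfold B. assert (0 < INR g) by (apply lt_0_INR; lia).
  pose proof sqrt2PI_pos.
  apply Rdiv_lt_0_compat.
  - apply Rmult_lt_0_compat. apply sqrt_lt_R0; lra. apply pow_lt; lra.
  - apply Rmult_lt_0_compat. apply Rmult_lt_0_compat. lra. apply exp_pos.
    apply lt_0_INR. pose proof (lt_O_fact g). lia.
Qed.

Lemma B_ratio k : B (S k) <= exp 1 * B (S (S k)).
Proof.
  unfold B.
  set (a := INR (S k)). set (b := INR (S (S k))).
  assert (Hb : b = a + 1) by (unfold a, b; rewrite (S_INR (S k)); ring).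
  assert (Ha : 0 < a) by (apply lt_0_INR; lia).
  replace (INR (fact (S (S k)))) with (b * INR (fact (S k))).
  2:{ unfold b. rewrite (fact_simpl (S k)), mult_INR. reflexivity. }
  replace (exp b) with (exp 1 * exp a) by (rewrite Hb, exp_plus; ring).
  replace (b ^ S (S k)) with (b * b ^ S k) by reflexivity.
  pose proof sqrt2PI_pos.
  assert (0 < INR (fact (S k))) by (apply lt_0_INR; apply lt_O_fact).
  pose proof (exp_pos 1). pose proof (exp_pos a).
  assert (sqrt a <= sqrt b) by (apply sqrt_le_1_alt; lra).
  assert (a ^ S k <= b ^ S k) by (apply pow_incr; lra).
  assert (0 <= sqrt a) by apply sqrt_pos.
  assert (0 < a ^ S k) by (apply pow_lt; lra).
  replace (exp 1 * (sqrt b * (b * b ^ S k) / (sqrt (2 * PI) * (exp 1 * exp a) * (b * INR (fact (S k))))))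
    with (sqrt b * b ^ S k / (sqrt (2 * PI) * exp a * INR (fact (S k)))) by (field; repeat split; lra).
  unfold Rdiv. apply Rmult_le_compat_r.
  - apply Rlt_le, Rinv_0_lt_compat. repeat apply Rmult_lt_0_compat; lra.
  - apply Rmult_le_compat; lra.
Qed.

Lemma E_ratio (n k : nat) : (1 <= n)%nat ->
  exp (INR n * f_fun (INR (S k) / INR n) + j_fun (INR (S k) / INR n)) <=
  3 * exp (INR n * f_fun (INR (S (S k)) / INR n) + j_fun (INR (S (S k)) / INR n)).
Proof.
  intros Hn. assert (Hn0 : 0 < INR n) by (apply lt_0_INR; lia).
  set (t0 := INR (S k) / INR n). set (t1 := INR (S (S k)) / INR n).
  assert (Ht0 : 0 < t0) by (apply Rdiv_lt_0_compat; [apply lt_0_INR; lia| lra]).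
  assert (Hlt : t0 < t1).
  { unfold t0, t1. unfold Rdiv. apply Rmult_lt_compat_r. apply Rinv_0_lt_compat; lra.
    apply lt_INR. lia. }
  assert (H2 : t1 <= 2 * t0).
  { unfold t0, t1. rewrite !S_INR. pose proof (pos_INR k).
    unfold Rdiv. rewrite <- Rmult_assoc. apply Rmult_le_compat_r.
    apply Rlt_le, Rinv_0_lt_compat; lra. lra. }
  destruct (theta_spec t0 Ht0) as [y [Hy [Hhy [Hfy Hjy]]]].
  destruct (theta_spec t1 ltac:(lra)) as [x [Hx [Hhx [Hfx Hjx]]]].
  assert (Hyx : y <= x).
  { destruct (Rle_or_lt y x) as [?|Hl]; auto.
    pose proof (h_mono x y ltac:(lra) ltac:(lra)). lra. }
  pose proof (F_mono y x ltac:(lra) ltac:(lra)) as HF.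
  destruct (Q_bounds x Hx) as [Qx1 [Qx2 [Qx3 Qx4]]].
  destruct (Q_bounds y Hy) as [Qy1 [Qy2 [Qy3 Qy4]]].
  assert (HQy : 0 < Q y) by nra.
  assert (HQx : 0 < Q x) by nra.
  assert (HQ : Q x <= 6 * Q y).
  { destruct (Rle_or_lt (y*y) (/2)) as [Hs|Hs].
    - assert (t0 <= 2 * (y*y) / 3).
      { rewrite <- Hhy. eapply Rle_trans; [exact Qy4|].
        apply (Rmult_le_reg_r (3 * (1 - y*y))). nra.
        unfold Rdiv. field_simplify; nra. }
      nra.
    - nra. }
  rewrite Hfy, Hfx, Hjy, Hjx.
  set (d := INR n * F y + (- / 2 * ln (Q y) + / 2 * ln 2)).
  set (d1 := INR n * F x + (- / 2 * ln (Q x) + / 2 * ln 2)).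
  set (w := / 2 * (ln (Q x) - ln (Q y))).
  assert (Hd : d <= d1 + w).
  { unfold d, d1, w. assert (INR n * F y <= INR n * F x) by (apply Rmult_le_compat_l; lra). lra. }
  assert (Hw : exp w * exp w <= 6).
  { rewrite <- exp_plus. replace (w + w) with (ln (Q x) - ln (Q y)) by (unfold w; field).
    unfold Rminus. rewrite exp_plus, exp_Ropp, !exp_ln by lra.
    apply (Rmult_le_reg_r (Q y)). lra. field_simplify; lra. }
  assert (Hw3 : exp w <= 3). { pose proof (exp_pos w). nra. }
  fold d d1.
  assert (He : exp d <= exp (d1 + w)).
  { destruct Hd as [Hd|Hd]; [apply Rlt_le, exp_increasing; auto| rewrite Hd; lra]. }
  rewrite exp_plus in He. pose proof (exp_pos d1). nra.
Qed.

Lemma div_le a b c d : 0 < b -> 0 < d -> a * d <= c * b -> a / b <= c / d.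
Proof.
  intros Hb Hd H.
  replace (a/b) with ((a*d) * /(b*d)) by (field; lra).
  replace (c/d) with ((c*b) * /(b*d)) by (field; lra).
  apply Rmult_le_compat_r; [left; apply Rinv_0_lt_compat; nra | auto].
Qed.

Lemma Omega_pos n g : (1 <= n)%nat -> 0 < Omega n g.
Proof.
  intros Hn. assert (0 < INR n) by (apply lt_0_INR; lia).
  destruct g as [|m].
  - unfold Omega. pose proof sqrt2PI_pos. assert (0 < sqrt (INR n)) by (apply sqrt_lt_R0; lra).
    apply Rdiv_lt_0_compat; [|lra]. apply Rmult_lt_0_compat. apply pow_lt; lra.
    apply Rinv_0_lt_compat. nra.
  - rewrite Omega_S. apply Rmult_lt_0_compat; [apply Rmult_lt_0_compat|apply exp_pos].
    apply B_pos; lia. apply pow_lt; lra.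
Qed.

Lemma s1_bound n : (1 <= n)%nat -> s n 1 <= 10 / INR n ^ 2.
Proof.
  intros Hn. assert (Hn0 : 0 < INR n) by (apply lt_0_INR; lia).
  unfold s. replace (1 - 1)%nat with 0%nat by lia.
  rewrite Omega_S.
  set (t := INR 1 / INR n).
  assert (Ht : 0 < t) by (unfold t; simpl; apply Rdiv_lt_0_compat; lra).
  destruct (theta_spec t Ht) as [x [Hx [Hhx [Hf Hj]]]].
  rewrite Hf, Hj.
  destruct (Q_bounds x Hx) as [Qx1 [Qx2 [Qx3 Qx4]]].
  pose proof (F_ge x Hx) as HF.
  assert (HQ : 0 < Q x) by nra.
  set (v := exp (- / 2 * ln (Q x) + / 2 * ln 2)).
  assert (Hv : 2 * INR n / 3 <= v * v).
  { unfold v. rewrite <- exp_plus.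
    replace (- / 2 * ln (Q x) + / 2 * ln 2 + (- / 2 * ln (Q x) + / 2 * ln 2)) with (ln 2 + - ln (Q x)) by field.
    rewrite exp_plus, exp_Ropp, !exp_ln by lra.
    assert (Q x <= 3 / INR n). { unfold t in Hhx. simpl in Hhx. lra. }
    apply (Rmult_le_reg_r (Q x * 3)). nra.
    field_simplify; try lra.
    assert (Q x * INR n <= 3). { apply (Rmult_le_reg_r (/ INR n)). apply Rinv_0_lt_compat; lra.
      field_simplify; lra. }
    nra. }
  set (W := 4 ^ n).
  assert (HW : W <= exp (INR n * F x)).
  { unfold W. rewrite <- Rpower_pow by lra. unfold Rpower.
    assert (INR n * ln 4 <= INR n * F x) by (apply Rmult_le_compat_l; lra).
    destruct H as [H|H]; [apply Rlt_le, exp_increasing; auto| rewrite H; lra]. }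
  rewrite exp_plus. fold v.
  set (S := sqrt (INR n)).
  assert (HS : S * S = INR n) by (apply sqrt_sqrt; lra).
  assert (HS0 : 0 < S) by (apply sqrt_lt_R0; lra).
  assert (HB1 : B 1 = / (sqrt (2*PI) * exp 1)).
  { unfold B. change (INR 1) with 1. rewrite sqrt_1. simpl. field.
    split. pose proof (exp_pos 1); lra. pose proof sqrt2PI_pos; lra. }
  rewrite HB1. unfold Omega. fold W. fold S.
  pose proof sqrt2PI_pos. pose proof (exp_pos 1) as He1. pose proof exp_le_3.
  assert (Hv0 : 0 < v) by apply exp_pos.
  assert (HW0 : 0 < W) by (apply pow_lt; lra).
  set (u := exp (INR n * F x)) in *.
  assert (HSv : 3 * INR n <= 10 * (S * v)).
  { assert (0 <= S * v) by nra.
    assert ((3 * INR n) * (3 * INR n) <= (10 * (S*v)) * (10 * (S*v))).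
    { replace ((10 * (S*v)) * (10 * (S*v))) with (100 * (S*S) * (v*v)) by ring. rewrite HS. nra. }
    nra. }
  replace (W * / (INR n * S) / sqrt (2 * PI) / (/ (sqrt (2 * PI) * exp 1) * INR n ^ (2 * 0) * (u * v)))
    with (W * exp 1 / (INR n * S * u * v)) by (simpl; field; repeat split; lra).
  apply div_le. repeat apply Rmult_lt_0_compat; lra. simpl; nra.
  simpl.
  assert (W * exp 1 * (INR n * (INR n * 1)) <= u * exp 1 * (INR n * (INR n * 1))).
  { apply Rmult_le_compat_r. nra. apply Rmult_le_compat_r; lra. }
  assert (u * exp 1 * (INR n * INR n) <= 10 * (INR n * S * u * v)).
  { assert (exp 1 * INR n <= 10 * (S * v)) by nra.
    assert (0 < u * INR n) by (apply Rmult_lt_0_compat; lra).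
    nra. }
  lra.
Qed.

Theorem proposition8 :
  exists (C : R) (N : nat), 0 < C /\
    forall n g : nat, (N <= n)%nat -> (1 <= g)%nat ->
      0 < s n g /\ s n g <= C / (INR n ^ 2).
Proof.
  exists 10, 1%nat. split; [lra|].
  intros n g Hn Hg. assert (Hn0 : 0 < INR n) by (apply lt_0_INR; lia).
  split.
  { unfold s. apply Rdiv_lt_0_compat; apply Omega_pos; lia. }
  destruct g as [|[|k]]; [lia| apply s1_bound; lia|].
  unfold s. replace (S (S k) - 1)%nat with (S k) by lia.
  rewrite !Omega_S.
  pose proof (E_ratio n k Hn) as HE.
  pose proof (B_ratio k) as HB.
  set (E0 := exp (INR n * f_fun (INR (S k) / INR n) + j_fun (INR (S k) / INR n))) in *.
  set (E1 := exp (INR n * f_fun (INR (S (S k)) / INR n) + j_fun (INR (S (S k)) / INR n))) in *.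
  assert (0 < E0) by apply exp_pos. assert (0 < E1) by apply exp_pos.
  assert (0 < B (S k)) by (apply B_pos; lia). assert (0 < B (S (S k))) by (apply B_pos; lia).
  pose proof exp_le_3. pose proof (exp_pos 1).
  replace (2 * S k)%nat with (S (S (2 * k))) by lia.
  set (P := INR n ^ (2 * k)).
  assert (0 < P) by (apply pow_lt; lra).
  replace (INR n ^ S (S (2*k))) with (P * INR n ^ 2) by (unfold P; simpl; ring).
  apply div_le.
  { assert (0 < INR n ^2) by (apply pow_lt; lra). apply Rmult_lt_0_compat; [apply Rmult_lt_0_compat; [lra| apply Rmult_lt_0_compat; lra]| lra]. }
  { apply pow_lt; lra. }
  assert (B (S k) * E0 <= 9 * (B (S (S k)) * E1)).
  { apply Rle_trans with ((exp 1 * B (S (S k))) * (3 * E1)).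
    apply Rmult_le_compat; lra. assert (0 < B (S (S k)) * E1) by (apply Rmult_lt_0_compat; lra). nra. }
  assert (0 < INR n ^ 2) by (apply pow_lt; lra).
  replace (B (S k) * P * E0 * INR n ^ 2) with ((B (S k) * E0) * (P * INR n ^ 2)) by ring.
  replace (10 * (B (S (S k)) * (P * INR n ^ 2) * E1)) with (10 * (B (S (S k)) * E1) * (P * INR n ^ 2)) by ring.
  apply Rmult_le_compat_r. nra. nra.
Qed.
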